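(* Let $m=2$. For every polynomial $f\in\mathbb{C}[\mathbf{a},\mathbf{b}]$, we have $f+Rf\in\mathrm{LSym}[\kappa_1^{-1},\dots,\kappa_n^{-1}]$, where $Rf=f\circ R$.
   Context: Variables $a_1,\dots,a_n,b_1,\dots,b_n$ (subscripts mod $n$), where $a_i=x_1^i$, $b_i=x_2^i$. $\mathrm{LSym}$ is the $\mathbb{C}$-subalgebra of $\mathbb{C}[\mathbf{a},\mathbf{b}]$ generated by $a_i+b_{i-1}$ and $a_ib_i$ for $i\in[n]$. Let $\kappa_i=\sum_{k=0}^{n-1}b_ib_{i+1}\cdots b_{i+k-1}a_{i+k+1}\cdots a_{i+n-1}$. The geometric $R$-matrix is the rational map $R:a_i\mapsto b_i\kappa_{i+1}/\kappa_i$, $b_i\mapsto a_i\kappa_i/\kappa_{i+1}$. *)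

(* Defs.v *)
From HB Require Import structures.
From mathcomp Require Import all_boot all_algebra.
From mathcomp Require Import Rstruct complex.
From mathcomp Require Import mpoly.
From mathcomp Require Import fraction.

Set Implicit Arguments.
Unset Strict Implicit.
Unset Printing Implicit Defensive.

Import GRing.Theory.
Local Open Scope ring_scope.

Definition CC : numClosedFieldType := complex Rdefinitions.R.

(* C[a_1..a_n, b_1..b_n]: 2n variables; variable (lshift n j) is a_j,
   variable (rshift n j) is b_j, for j : 'I_n (subscripts taken mod n). *)
Definition Pol (n : nat) := {mpoly CC[n + n]}.

Definition Frac (n : nat) := {fraction Pol n}.

Definition toF (n : nat) (p : Pol n) : Frac n := FracField.tofrac p.

Definition va (n : nat) (i : nat) : Pol n :=
  if (insub (i %% n)%N : option 'I_n) is Some j then 'X_(lshift n j) else 0.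
Definition vb (n : nat) (i : nat) : Pol n :=
  if (insub (i %% n)%N : option 'I_n) is Some j then 'X_(rshift n j) else 0.

Definition kappa (n : nat) (i : nat) : Pol n :=
  \sum_(k < n) ((\prod_(0 <= t < k) vb n (i + t)%N) *
                (\prod_(k.+1 <= t < n) va n (i + t)%N)).

(* Images of the variables under the geometric R-matrix:
   a_i |-> b_i kappa_{i+1} / kappa_i,  b_i |-> a_i kappa_i / kappa_{i+1}. *)
Definition Rvar (n : nat) (v : 'I_(n + n)) : Frac n :=
  match split v with
  | inl j => toF (vb n j) * toF (kappa n j.+1) / toF (kappa n j)
  | inr j => toF (va n j) * toF (kappa n j) / toF (kappa n j.+1)
  end.

Definition Rmat (n : nat) (f : Pol n) : Frac n :=
  mmap (fun c : CC => toF (c%:MP)) (@Rvar n) f.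

(* Generators of LSym[kappa_1^{-1}, ..., kappa_n^{-1}] as a C-algebra:
   a_i + b_{i-1}, a_i b_i, kappa_i^{-1} for i in [n]. *)
Definition lsym_gen (n : nat) (v : 'I_(n + n + n)) : Frac n :=
  match split v with
  | inl w => match split w with
             | inl i => toF (va n i + vb n (i + n).-1%N)
             | inr i => toF (va n i * vb n i)
             end
  | inr i => (toF (kappa n i))^-1
  end.

Definition in_LSym_loc (n : nat) (x : Frac n) : Prop :=
  exists P : {mpoly CC[n + n + n]},
    x = mmap (fun c : CC => toF (c%:MP)) (@lsym_gen n) P.

(* Main.v *)
Require Import Defs.
From HB Require Import structures.
From mathcomp Require Import all_boot all_algebra.
From mathcomp Require Import Rstruct complex.
From mathcomp Require Import mpoly.
From mathcomp Require Import fraction.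
From mathcomp Require Import ring.
Import GRing.Theory.
Local Open Scope ring_scope.
Set Implicit Arguments.
Unset Strict Implicit.
Section Chain.
Variables (S : comRingType) (a b : nat -> S).
Definition Ap i m := \prod_(0 <= t < m) a (i + t)%N.
Definition Bp i m := \prod_(0 <= t < m) b (i + t)%N.
Definition Cs i m := \sum_(k < m) ((\prod_(0 <= t < k) b (i + t)%N) *
                (\prod_(k.+1 <= t < m) a (i + t)%N)).

Lemma Ap_S i m : Ap i m.+1 = Ap i m * a (i + m)%N.
Proof. by rewrite /Ap big_nat_recr. Qed.
Lemma Bp_S i m : Bp i m.+1 = Bp i m * b (i + m)%N.
Proof. by rewrite /Bp big_nat_recr. Qed.
Lemma Ap_Sl i m : Ap i m.+1 = a i * Ap i.+1 m.
Proof.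
rewrite /Ap big_nat_recl // addn0; congr (_ * _); apply: eq_bigr => t _.
by rewrite addnS addSn.
Qed.
Lemma Bp_Sl i m : Bp i m.+1 = b i * Bp i.+1 m.
Proof.
rewrite /Bp big_nat_recl // addn0; congr (_ * _); apply: eq_bigr => t _.
by rewrite addnS addSn.
Qed.
Lemma Cs0 i : Cs i 0 = 0. Proof. by rewrite /Cs big_ord0. Qed.
Lemma R1 i m : Cs i m.+1 = Cs i m * a (i + m)%N + Bp i m.
Proof.
rewrite /Cs big_ord_recr /= [X in _ + _ * X]big_geq // mulr1; congr (_ + _).
rewrite mulr_suml; apply: eq_bigr => k _.
by rewrite big_nat_recr //= mulrA.
Qed.
Lemma Cs1 i : Cs i 1 = 1.
Proof. by rewrite R1 Cs0 mul0r add0r /Bp big_geq. Qed.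
Lemma R2 i m : Cs i m.+1 = Ap i.+1 m + b i * Cs i.+1 m.
Proof.
elim: m => [|m IH]; first by rewrite Cs1 Cs0 /Ap big_geq // mulr0 addr0.
rewrite R1 IH R1 Ap_S Bp_Sl addSnnS; ring.
Qed.
Lemma R3 i m : Cs i m.+2 = (a (i + m).+1 + b (i + m)) * Cs i m.+1
   - (a (i + m) * b (i + m)) * Cs i m.
Proof. rewrite R1 (R1 i m) Bp_S -addnS; ring. Qed.

Hypothesis n : nat.
Hypothesis hn : (0 < n)%N.
Hypothesis aper : forall j, a (j + n)%N = a j.
Hypothesis bper : forall j, b (j + n)%N = b j.

Lemma Ap_cyc j : Ap j.+1 n = Ap j n.
Proof.
case: n hn aper => // k _ ap.
rewrite (Ap_S j.+1) (Ap_Sl j) addSnnS ap mulrC //.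
Qed.
Lemma Bp_cyc j : Bp j.+1 n = Bp j n.
Proof.
case: n hn bper => // k _ bp.
rewrite (Bp_S j.+1) (Bp_Sl j) addSnnS bp mulrC //.
Qed.
Lemma Ap_0 j : Ap j n = Ap 0 n.
Proof. elim: j => // j IH; by rewrite Ap_cyc. Qed.
Lemma Bp_0 j : Bp j n = Bp 0 n.
Proof. elim: j => // j IH; by rewrite Bp_cyc. Qed.

Lemma P1 j : a j * Cs j n = Ap 0 n + (a j * b j) * Cs j.+1 n.-1.
Proof.
rewrite -(Ap_0 j); case: n hn => // k _ /=.
rewrite R2 Ap_Sl; ring.
Qed.
Lemma P2 j : b j * Cs j.+1 n = Bp 0 n + (a j * b j) * Cs j.+1 n.-1.
Proof.
rewrite -(Bp_0 j); case: n hn aper => // k _ ap /=.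
rewrite R1 Bp_Sl addSnnS ap; ring.
Qed.
Lemma P4 : Ap 0 n + Bp 0 n = Cs 0 n.+1 - (a 0 * b 0) * Cs 1 n.-1.
Proof.
rewrite R2 Ap_cyc; case: n hn aper => // k _ ap /=.
rewrite R1 Bp_Sl addSnnS ap; ring.
Qed.
End Chain.

Definition fF (n : nat) : {rmorphism CC -> Frac n} :=
  (@FracField.tofrac (Pol n)) \o (@mpolyC (n+n) CC).
Lemma RmatE n f : Rmat f = mmap (fF n) (@Rvar n) f.
Proof. reflexivity. Qed.

Lemma split_l m k (x : 'I_m) : split (lshift k x) = inl x.
Proof. exact: (unsplitK (inl x)). Qed.
Lemma split_r m k (x : 'I_k) : split (rshift m x) = inr x.
Proof. exact: (unsplitK (inr x)). Qed.

Lemma g_add (F : comRingType) (l1 l1' l2 l2' x : F) :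
  (l1 + l1' * x) + (l2 + l2' * x) = (l1 + l2) + (l1' + l2') * x.
Proof. ring. Qed.
Lemma g_mul (F : comRingType) (l1 l1' l2 l2' x y : F) :
  (l1 + l1' * x) * (l2 + l2' * x) =
  (l1 * l2 - l1' * l2' * (x * y)) + (l1 * l2' + l1' * l2 + l1' * l2' * (x + y)) * x.
Proof. ring. Qed.
Lemma g_fin (F : comRingType) (l l' x y : F) :
  (l + l' * x) + (l + l' * y) = (l + l) + l' * (x + y).
Proof. ring. Qed.
Lemma g_q (F : comRingType) (x y u v : F) : (x * u) * (y * v) = (x * y) * (u * v).
Proof. ring. Qed.
Lemma g_C (F : comRingType) (c : F) : c = c + 0 * 0.
Proof. ring. Qed.
Lemma f1 (F : fieldType) (K x t g : F) : K != 0 -> x * K = t + g -> x = g / K + K^-1 * t.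
Proof. move=> hK e; have -> : x = (t + g) / K by rewrite -e; field. field. exact hK. Qed.
Lemma f2 (F : fieldType) (K y t g : F) : K != 0 -> y = t + g -> y / K = g / K + K^-1 * t.
Proof. move=> hK ->; field. exact hK. Qed.
Lemma f3 (F : fieldType) (K x t t' g : F) : K != 0 -> x * K = t' + g ->
  x = (t + t' + g) / K + (- K^-1) * t.
Proof. move=> hK e; have -> : x = (t' + g) / K by rewrite -e; field. field. exact hK. Qed.
Lemma f4 (F : fieldType) (K y t t' g : F) : K != 0 -> y = t + g ->
  y / K = (t + t' + g) / K + (- K^-1) * t'.
Proof. move=> hK ->; field. exact hK. Qed.

Lemma toFD n (x y : Pol n) : toF (x + y) = toF x + toF y.
Proof. exact: rmorphD. Qed.
Lemma toFM n (x y : Pol n) : toF (x * y) = toF x * toF y.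
Proof. exact: rmorphM. Qed.

Lemma RmatD n (x y : Pol n) : Rmat (x + y) = Rmat x + Rmat y.
Proof. by rewrite !RmatE mmapD. Qed.
Lemma RmatM n (x y : Pol n) : Rmat (x * y) = Rmat x * Rmat y.
Proof. by rewrite !RmatE rmorphM. Qed.

Section Main.
Variables (n : nat) (hn : (0 < n)%N).

Local Notation a := (va n).
Local Notation b := (vb n).
Local Notation L := (@in_LSym_loc n).
Local Notation phi := (mmap (fF n) (@lsym_gen n)).

Lemma LE x : L x <-> exists P, x = phi P.
Proof. by []. Qed.

Lemma L_add x y : L x -> L y -> L (x + y).
Proof. move=> /LE [P ->] /LE [Q ->]; apply/LE; exists (P + Q); by rewrite mmapD. Qed.
Lemma L_mul x y : L x -> L y -> L (x * y).
Proof. move=> /LE [P ->] /LE [Q ->]; apply/LE; exists (P * Q); by rewrite rmorphM. Qed.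
Lemma L_opp x : L x -> L (- x).
Proof. move=> /LE [P ->]; apply/LE; exists (- P); by rewrite mmapN. Qed.
Lemma L_C c : L (toF c%:MP).
Proof. apply/LE; exists c%:MP; by rewrite mmapC. Qed.
Lemma L_1 : L 1.
Proof. apply/LE; exists 1; by rewrite rmorph1. Qed.
Lemma L_0 : L 0.
Proof. apply/LE; exists 0; by rewrite mmap0. Qed.
Lemma L_X v : L (lsym_gen v).
Proof. apply/LE; exists 'X_v; by rewrite mmapX mmap1U. Qed.

Lemma va_mod x y : x = y %[mod n] -> a x = a y.
Proof. by rewrite /va => ->. Qed.
Lemma vb_mod x y : x = y %[mod n] -> b x = b y.
Proof. by rewrite /vb => ->. Qed.
Lemma aper j : a (j + n)%N = a j.
Proof. apply: va_mod; by rewrite modnDr. Qed.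
Lemma bper j : b (j + n)%N = b j.
Proof. apply: vb_mod; by rewrite modnDr. Qed.

Definition ordm (j : nat) : 'I_n := Ordinal (ltn_pmod j hn).

Lemma L_p j : L (toF (a j * b j)).
Proof.
have := L_X (lshift n (rshift n (ordm j))).
rewrite /lsym_gen ?split_l ?split_r /=.
by rewrite (va_mod (y := j)) ?modn_mod // (vb_mod (y := j)) ?modn_mod.
Qed.
Lemma L_e j : L (toF (a j.+1 + b j)).
Proof.
have := L_X (lshift n (lshift n (ordm j.+1))).
rewrite /lsym_gen ?split_l ?split_r /=.
rewrite (va_mod (y := j.+1)) ?modn_mod // (vb_mod (y := j)) //.
have -> : ((j.+1 %% n + n).-1 = j.+1 %% n + n.-1)%N.
  by rewrite -!subn1 addnBA.
rewrite modnDml addSn -addnS prednK //.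
by rewrite modnDr.
Qed.
Lemma L_kinv j : L (toF (kappa n j))^-1.
Proof.
have := L_X (rshift (n + n) (ordm j)).
rewrite /lsym_gen ?split_l ?split_r /=.
suff -> : kappa n (j %% n) = kappa n j by [].
rewrite /kappa; apply: eq_bigr => k _; congr (_ * _); apply: eq_bigr => t _.
  by apply: vb_mod; rewrite modnDml.
by apply: va_mod; rewrite modnDml.
Qed.

Lemma kappaE j : kappa n j = Cs a b j n.
Proof. reflexivity. Qed.

Lemma L_Cs i m : L (toF (Cs a b i m)).
Proof.
suff H : forall m, L (toF (Cs a b i m)) /\ L (toF (Cs a b i m.+1)) by case: (H m).
elim=> [|k [H1 H2]].
  by rewrite Cs0 Cs1 /toF rmorph0 rmorph1; split; [exact: L_0 | exact: L_1].
split=> //; rewrite R3 /toF rmorphB.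
apply: L_add; last apply: L_opp; rewrite rmorphM; apply: L_mul => //; [exact: L_e | exact: L_p].
Qed.

Lemma va_X (j : 'I_n) : a j = 'X_(lshift n j).
Proof. by rewrite /va modn_small // valK. Qed.
Lemma vb_X (j : 'I_n) : b j = 'X_(rshift n j).
Proof. by rewrite /vb modn_small // valK. Qed.

Definition ev (w : 'I_(n + n)) : CC := if split w is inl _ then 1 else 0.

Lemma ev_a x : meval ev (a x) = 1.
Proof.
rewrite (va_mod (y := ordm x)) ?modn_mod // va_X mevalXU /ev split_l //.
Qed.
Lemma ev_b x : meval ev (b x) = 0.
Proof.
rewrite (vb_mod (y := ordm x)) ?modn_mod // vb_X mevalXU /ev split_r //.
Qed.
Lemma ev_Cs i m : meval ev (Cs a b i m.+1) = 1.
Proof.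
elim: m => [|m IH]; first by rewrite Cs1 meval1.
rewrite R1 mevalD mevalM IH ev_a mul1r.
by rewrite Bp_S mevalM ev_b mulr0 addr0.
Qed.
Lemma kappa_neq0 j : toF (kappa n j) != 0.
Proof.
rewrite /toF tofrac_eq0; apply/negP => /eqP H.
have := congr1 (meval ev) H; rewrite meval0 kappaE.
have := ev_Cs j n.-1; rewrite prednK // => -> /eqP; by rewrite oner_eq0.
Qed.

Definition th := toF (Ap a 0 n).
Definition th' := toF (Bp b 0 n).

Lemma L_s : L (th + th').
Proof.
rewrite /th /th' /toF -rmorphD (@P4 _ a b n hn aper) rmorphB rmorphM.
apply: L_add; first exact: L_Cs.
apply: L_opp; apply: L_mul; [exact: L_p | exact: L_Cs].
Qed.

Lemma L_q : L (th * th').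
Proof.
rewrite /th /th' /toF -rmorphM.
suff H : forall m, L (FracField.tofrac (Ap a 0 m * Bp b 0 m)) by apply: H.
elim=> [|m IH]; first by rewrite /Ap /Bp !big_geq // mulr1 rmorph1; exact: L_1.
rewrite Ap_S Bp_S g_q rmorphM; apply: L_mul => //; exact: L_p.
Qed.

Definition Pg (g : Pol n) := exists (l l' : Frac n), [/\ L l, L l',
  toF g = l + l' * th & Rmat g = l + l' * th'].

Lemma Pg_add g h : Pg g -> Pg h -> Pg (g + h).
Proof.
move=> [l1 [l1' [L1 L1' E1 F1]]] [l2 [l2' [L2 L2' E2 F2]]].
exists (l1 + l2), (l1' + l2'); split; [exact: L_add | exact: L_add | |].
  by rewrite toFD E1 E2 g_add.
by rewrite RmatD F1 F2 g_add.
Qed.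

Lemma Pg_mul g h : Pg g -> Pg h -> Pg (g * h).
Proof.
move=> [l1 [l1' [L1 L1' E1 F1]]] [l2 [l2' [L2 L2' E2 F2]]].
exists (l1 * l2 - l1' * l2' * (th * th')),
  (l1 * l2' + l1' * l2 + l1' * l2' * (th + th')).
split.
- apply: L_add; first exact: L_mul.
  apply: L_opp; apply: L_mul; [exact: L_mul | exact: L_q].
- apply: L_add; first (apply: L_add; exact: L_mul).
  apply: L_mul; [exact: L_mul | exact: L_s].
- by rewrite toFM E1 E2 (g_mul _ _ _ _ _ th').
- rewrite RmatM F1 F2 (g_mul _ _ _ _ _ th).
  by rewrite [th' * th]mulrC [th' + th]addrC.
Qed.

Lemma Pg_C c : Pg c%:MP.
Proof.
exists (toF c%:MP), 0; split; [exact: L_C | exact: L_0 | by rewrite mul0r addr0 |].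
by rewrite RmatE mmapC mul0r addr0.
Qed.

Lemma Pg_X v : Pg 'X_v.
Proof.
have hR : Rmat 'X_v = Rvar v by rewrite RmatE mmapX mmap1U.
rewrite /Pg hR -(splitK v); case: (split v) => j /=; rewrite /Rvar ?split_l ?split_r.
- rewrite -va_X.
  have e1 := @P1 _ a b n hn aper j; have e2 := @P2 _ a b n hn aper bper j.
  rewrite -!kappaE in e1 e2.
  have E1 := congr1 (@toF n) e1; have E2 := congr1 (@toF n) e2.
  rewrite toFD toFM in E1; rewrite toFD toFM in E2.
  exists (toF (a j * b j * Cs a b j.+1 n.-1) / toF (kappa n j)), (toF (kappa n j))^-1.
  split.
  + apply: L_mul; last exact: L_kinv.
    rewrite toFM; apply: L_mul; [exact: L_p | exact: L_Cs].
  + exact: L_kinv.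
  + by apply: f1; [exact: kappa_neq0 | rewrite E1].
  + by apply: f2; [exact: kappa_neq0 | rewrite E2].
- rewrite -vb_X.
  have e1 := @P1 _ a b n hn aper j; have e2 := @P2 _ a b n hn aper bper j.
  rewrite -!kappaE in e1 e2.
  have E1 := congr1 (@toF n) e1; have E2 := congr1 (@toF n) e2.
  rewrite toFD toFM in E1; rewrite toFD toFM in E2.
  exists ((th + th' + toF (a j * b j * Cs a b j.+1 n.-1)) / toF (kappa n j.+1)),
    (- (toF (kappa n j.+1))^-1).
  split.
  + apply: L_mul; last exact: L_kinv.
    apply: L_add; first exact: L_s.
    rewrite toFM; apply: L_mul; [exact: L_p | exact: L_Cs].
  + by apply: L_opp; exact: L_kinv.
  + by apply: f3; [exact: kappa_neq0 | rewrite E2].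
  + by apply: f4; [exact: kappa_neq0 | rewrite E1].
Qed.

Lemma Pg_all f : Pg f.
Proof.
rewrite (mpolyE f); apply: (big_ind Pg).
- by rewrite -mpolyC0; exact: Pg_C.
- exact: Pg_add.
move=> m _; rewrite -mul_mpolyC; apply: Pg_mul; first exact: Pg_C.
rewrite mpolyXE_id; apply: (big_ind Pg).
- by rewrite -mpolyC1; exact: Pg_C.
- exact: Pg_mul.
move=> i _; elim: (m i) => [|k IH]; first by rewrite expr0 -mpolyC1; exact: Pg_C.
by rewrite exprS; apply: Pg_mul => //; exact: Pg_X.
Qed.
End Main.

Theorem lemmaB3 (n : nat) (hn : (0 < n)%N) (f : Pol n) :
  in_LSym_loc (toF f + Rmat f).
Proof.
have [l [l' [L1 L2 E1 E2]]] := Pg_all hn f.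
rewrite E1 E2 g_fin; apply: L_add; first exact: L_add.
apply: L_mul => //; exact: L_s.
Qed.
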